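(* For a packed word $u$, let $\mathrm{detass}(u)$ (the maximal unpacking of $u$) be the largest parking function $\mathbf a$, for the lexicographic order, such that $\mathrm{tass}(\mathbf a)=u$. In the Hopf algebra $\mathbf{PQSym}$, the elements $\mathbf F_{\mathbf a}$, where $\mathbf a$ runs over the parking functions of the form $\mathrm{detass}(u)$, span a Hopf subalgebra of $\mathbf{PQSym}$, which is isomorphic to $\mathbf{NCQSym}^*$, the graded dual of $\mathbf{NCQSym}$.
   Context: Letters are identified with positive integers. For a word $w$ with distinct letters $b_1<\dots<b_r$, $\mathrm{tass}(w)$ is the image of $w$ under $b_j\mapsto j$; $w$ is packed if $\mathrm{tass}(w)=w$. A parking function of length $n$ is a word over positive integers whose nondecreasing rearrangement $b_1\le\dots\le b_n$ satisfies $b_i\le i$. Parkization: for a word $w$ of length $n$ let $d(w)=\min\{i: |\{j:w_j\le i\}|<i\}$; if $d(w)=n+1$, $\mathrm{park}(w)=w$; otherwise decrease by $1$ every letter $>d(w)$ to get $w'$ and set $\mathrm{park}(w)=\mathrm{park}(w')$. $\mathbf{PQSym}$ (over a field $\mathbb K$ of characteristic $0$) has basis $(\mathbf F_{\mathbf a})$ indexed by parking functions, product $\mathbf F_{\mathbf a'}\mathbf F_{\mathbf a''}=\sum_{\mathbf a\in\mathbf a'\sqcup\!\sqcup(\mathbf a''[n'])}\mathbf F_{\mathbf a}$ ($n'$ the length of $\mathbf a'$, $\mathbf a''[n']$ obtained by adding $n'$ to each letter, $\sqcup\!\sqcup$ the shuffle), and coproduct $\Delta\mathbf F_{\mathbf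 a}=\sum_{\mathbf a=uv}\mathbf F_{\mathrm{park}(u)}\otimes\mathbf F_{\mathrm{park}(v)}$. $\mathbf{NCQSym}$ is the Hopf algebra with basis $\mathbf M_u=\sum_{\mathrm{tass}(w)=u}w\in\mathbb K\langle a_1,a_2,\dots\rangle$ ($u$ packed), product induced by $\mathbb K\langle A\rangle$, and coproduct $\Delta\mathbf M_u=\sum_{k=0}^{m}\mathbf M_{u_{\le k}}\otimes\mathbf M_{\mathrm{tass}(u_{>k})}$, $m$ the greatest letter of $u$, $u_{\le k}$ (resp. $u_{>k}$) the subword of letters $\le k$ (resp. $>k$). *)

(* Defs.v *)
From HB Require Import structures.
From mathcomp Require Import all_boot all_order all_algebra.
From mathcomp Require Import finmap.
From mathcomp.multinomials Require Import monalg.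
Set Implicit Arguments. Unset Strict Implicit. Unset Printing Implicit Defensive.
Import GRing.Theory.
Local Open Scope ring_scope.

Definition tass (w : seq nat) : seq nat :=
  map (fun x => (index x (sort leq (undup w))).+1) w.
Definition packed (w : seq nat) : bool := tass w == w.

Definition parking (w : seq nat) : bool :=
  let b := sort leq w in
  all (fun i => (0 < nth 0%N b i <= i.+1)%N) (iota 0 (size w)).

(* d(w) = min { i >= 1 : #{j : w_j <= i} < i }  (always <= n+1) *)
Definition dpos (w : seq nat) : nat :=
  head (size w).+1 [seq i <- iota 1 (size w).+1 | (count (fun x => x <= i) w < i)%N].

Fixpoint park_fuel (k : nat) (w : seq nat) : seq nat :=
  if k is k'.+1 then
    let d := dpos w in
    if d == (size w).+1 then w
    else park_fuel k' (map (fun x => if (d < x)%N then x.-1 else x) w)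
  else w.
(* each non-terminal step strictly decreases the sum of letters *)
Definition park (w : seq nat) : seq nat := park_fuel (sumn w).+1 w.

Fixpoint lexle (s t : seq nat) : bool :=
  match s, t with
  | [::], _ => true
  | _ :: _, [::] => false
  | x :: s', y :: t' => (x < y)%N || ((x == y) && lexle s' t')
  end.

(* a = detass(u) for some packed u: a is the lex-largest parking function
   with tass a = u (here u = tass a) *)
Definition is_detass (a : seq nat) : Prop :=
  parking a /\ forall b, parking b -> tass b = tass a -> lexle b a.

(* shuffle product of words, with multiplicities *)
Fixpoint shuffle (s : seq nat) : seq nat -> seq (seq nat) :=
  match s with
  | [::] => fun t => [:: t]
  | x :: s' =>
    fix shuf_t (t : seq nat) : seq (seq nat) :=
      match t with
      | [::] => [:: x :: s']
      | y :: t' => map (cons x) (shuffle s' t) ++ map (cons y) (shuf_t t')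
      end
  end.

Fixpoint allwords (n m : nat) : seq (seq nat) :=
  if n is n'.+1 then
    flatten [seq [seq i :: w | w <- allwords n' m] | i <- iota 1 m]
  else [:: [::]].
Definition packed_words (n : nat) : seq (seq nat) := filter packed (allwords n n).

Section FreeModules.
Variable K : fieldType.

(* free K-module on a basis indexed by I : {malg K[I]}; <<i>> is the basis
   vector indexed by i, g@_i the coefficient. The tensor product of free
   modules on I and J is the free module on I * J. *)

Definition in_span (I : choiceType) (P : I -> Prop) (g : {malg K[I]}) : Prop :=
  exists s : seq (K * I), (forall p, p \in s -> P p.2) /\
                          g = \sum_(p <- s) p.1 *: << p.2 >>.

Definition lin (I J : choiceType) (f : I -> {malg K[J]}) (g : {malg K[I]})
  : {malg K[J]} := \sum_(x <- msupp g) g@_x *: f x.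
Definition bilin (I J : choiceType) (f : I -> I -> {malg K[J]})
  (g h : {malg K[I]}) : {malg K[J]} :=
  \sum_(x <- msupp g) \sum_(y <- msupp h) (g@_x * h@_y) *: f x y.

Definition tens (I : choiceType) (x y : {malg K[I]}) : {malg K[(I * I)%type]} :=
  bilin (fun a b => << (a, b) >>) x y.
Definition tmap (I J : choiceType) (phi : {malg K[I]} -> {malg K[J]})
  (t : {malg K[(I * I)%type]}) : {malg K[(J * J)%type]} :=
  \sum_(p <- msupp t) t@_p *: tens (phi << p.1 >>) (phi << p.2 >>).

(* ---------------- PQSym (basis F_a = << a >>) ---------------- *)
Definition mulP : {malg K[seq nat]} -> {malg K[seq nat]} -> {malg K[seq nat]} :=
  bilin (fun a b => \sum_(c <- shuffle a (map (addn (size a)) b)) << c >>).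
Definition unitP : {malg K[seq nat]} := << [::] >>.
Definition DeltaP : {malg K[seq nat]} -> {malg K[(seq nat * seq nat)%type]} :=
  lin (fun a => \sum_(i < (size a).+1) << (park (take i a), park (drop i a)) >>).
Definition epsP (g : {malg K[seq nat]}) : K := g@_[::].

(* antipode of the graded connected bialgebra PQSym, by the recursion
   m (S (x) id) Delta = unit o counit:
   S(F_a) = - sum_{i < n} S(F_park(a_1..a_i)) F_park(a_{i+1}..a_n)  (n >= 1) *)
Fixpoint antipP_fuel (k : nat) (a : seq nat) : {malg K[seq nat]} :=
  if k is k'.+1 then
    if a is [::] then << [::] >>
    else - \sum_(i < size a)
             mulP (antipP_fuel k' (park (take i a))) << park (drop i a) >>
  else 0.
Definition antipP : {malg K[seq nat]} -> {malg K[seq nat]} :=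
  lin (fun a => antipP_fuel (size a).+1 a).

(* noncommutative series over the alphabet a_1, a_2, ... (words = seq nat) *)
Definition series := seq nat -> K.
Definition sprod (f g : series) : series :=
  fun w => \sum_(i < (size w).+1) f (take i w) * g (drop i w).
Definition Mser (u : seq nat) : series := fun w => (tass w == u)%:R.
(* coefficient of M_w in M_u M_v (product induced by K<A>); for an element
   of NCQSym the coefficient of M_w (w packed) is its coefficient on the word w *)
Definition cM (u v w : seq nat) : K := sprod (Mser u) (Mser v) w.
Definition DeltaM (u : seq nat) : {malg K[(seq nat * seq nat)%type]} :=
  \sum_(k < (\max_(x <- u) x).+1)
     << ([seq x <- u | (x <= k)%N], tass [seq x <- u | (k < x)%N]) >>.
Definition dM (u v w : seq nat) : K := (DeltaM w)@_(u, v).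

(* ---------------- NCQSym^* (graded dual, dual basis N_u = << u >>) ------ *)
(* <N_u N_v, M_w> = <N_u (x) N_v, Delta M_w>,
   <Delta N_w, M_u (x) M_v> = <N_w, M_u M_v> *)
Definition mulN : {malg K[seq nat]} -> {malg K[seq nat]} -> {malg K[seq nat]} :=
  bilin (fun u v => \sum_(w <- packed_words (size u + size v)) dM u v w *: << w >>).
Definition unitN : {malg K[seq nat]} := << [::] >>.
Definition DeltaN : {malg K[seq nat]} -> {malg K[(seq nat * seq nat)%type]} :=
  lin (fun w => \sum_(i < (size w).+1) \sum_(u <- packed_words i)
                  \sum_(v <- packed_words (size w - i)) cM u v w *: << (u, v) >>).
Definition epsN (g : {malg K[seq nat]}) : K := g@_[::].

End FreeModules.

(* Main.v *)
Require Import Defs.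
From HB Require Import structures.
From mathcomp Require Import all_boot all_order all_algebra.
From mathcomp Require Import finmap.
From mathcomp.multinomials Require Import monalg.
From mathcomp Require Import zify.
Import GRing.Theory.
Set Implicit Arguments. Unset Strict Implicit. Unset Printing Implicit Defensive.

Lemma count_add (T : Type) (P Q1 Q2 : pred T) (s : seq T) :
  (forall y, (P y : nat) = Q1 y + Q2 y) -> count P s = count Q1 s + count Q2 s.
Proof. move=> H; elim: s => //= y s ->; rewrite H; lia. Qed.

Lemma count_le2 (T : Type) (P Q1 Q2 : pred T) (s : seq T) :
  (forall y, (P y : nat) <= Q1 y + Q2 y) -> count P s <= count Q1 s + count Q2 s.
Proof. move=> H; elim: s => //= y s IH; have := H y; lia. Qed.

Lemma count_le1 (T : Type) (P Q : pred T) (s : seq T) :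
  (forall y, P y -> Q y) -> count P s <= count Q s.
Proof. by move=> H; apply: sub_count. Qed.

Definition cntlt (x : nat) (s : seq nat) := count (fun y => y < x) s.

Lemma cntlt_lt_mono x y s : x \in s -> y \in s -> (cntlt x s < cntlt y s) = (x < y).
Proof.
move=> xs ys; rewrite /cntlt; case: (ltnP x y) => h.
  rewrite (@count_add _ (fun z => z < y) (fun z => z < x) (fun z => x <= z < y)); last first.
    by move=> z; case: (ltnP z x) => /= ?; case: (ltnP z y) => ? //=; lia.
  have : 0 < count (fun z => x <= z < y) s.
    by rewrite -has_count; apply/hasP; exists x => //; rewrite leqnn h.
  lia.
apply/negbTE; rewrite -leqNgt; apply: count_le1 => z /= ?; lia.
Qed.

Lemma cntlt_lt_size x s : x \in s -> cntlt x s < size s.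
Proof.
move=> xs; rewrite /cntlt -(count_predC (fun y => y < x) s).
have : 0 < count (predC (fun y => y < x)) s.
  by rewrite -has_count; apply/hasP; exists x => //=; rewrite ltnn.
lia.
Qed.

Lemma index_sorted x s : sorted leq s -> uniq s -> x \in s -> index x s = cntlt x s.
Proof.
elim: s => //= y s IH srt /andP[yns us]; rewrite inE.
have allge : all (fun z => y <= z) s.
  by apply: (order_path_min leq_trans srt).
rewrite /cntlt /=.
case: (eqVneq y x) => [eq|neq] /= xs.
  subst x.
  rewrite ltnn add0n -(@eq_in_count _ pred0) ?count_pred0 //.
  by move=> z zs /=; apply/esym/negbTE; rewrite -leqNgt; exact: (allP allge z zs).
have xs' := xs.
have yx : y < x.
  move/allP: allge => /(_ x xs') => h; move/eqP: neq; lia.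
rewrite yx IH //; exact: path_sorted srt.
Qed.

Definition tw (w : seq nat) x := (cntlt x (undup w)).+1.

Lemma tassE w : tass w = map (tw w) w.
Proof.
rewrite /tass; apply/eq_in_map => x xw.
rewrite index_sorted ?sort_sorted ?sort_uniq ?undup_uniq ?mem_sort ?mem_undup //.
by rewrite /tw /cntlt (permP (permEl (perm_sort leq (undup w)))).
Qed.

Definition mono_on (h : nat -> nat) (s : seq nat) :=
  forall x y, x \in s -> y \in s -> (h x < h y) = (x < y).

Lemma mono_inj h s x y : mono_on h s -> x \in s -> y \in s -> h x = h y -> x = y.
Proof.
move=> m xs ys e; case: (ltngtP x y) => // c.
  by move: (m _ _ xs ys); rewrite c e ltnn.
by move: (m _ _ ys xs); rewrite c e ltnn.
Qed.

Lemma mono_sub h s t : {subset t <= s} -> mono_on h s -> mono_on h t.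
Proof. by move=> st m x y xt yt; apply: m; apply: st. Qed.

Lemma undup_map_cnt g w x : mono_on g (x :: w) ->
  cntlt (g x) (undup (map g w)) = cntlt x (undup w).
Proof.
elim: w => //= y w IH m.
have m' : mono_on g (x :: w).
  apply: mono_sub m => z; rewrite !inE => /orP[->|->]; by rewrite ?orbT.
have e : (g y \in map g w) = (y \in w).
  apply/mapP/idP => [[z zw gz]|yw]; last by exists y.
  have yz : y = z.
    by apply: (mono_inj m) => //; rewrite !inE ?zw ?eqxx ?orbT.
  by rewrite yz.
rewrite e; case: (y \in w) => /=; first exact: IH.
rewrite /cntlt /= -/(cntlt _ _) -/(cntlt _ _).
by rewrite IH // m // !inE eqxx ?orbT.
Qed.

Definition Sim (s t : seq nat) := exists h, t = map h s /\ mono_on h s.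

Lemma Sim_refl s : Sim s s.
Proof. by exists id; split; [rewrite map_id|]. Qed.

Lemma Sim_trans s t u : Sim s t -> Sim t u -> Sim s u.
Proof.
move=> [h [-> mh]] [k [-> mk]]; exists (k \o h); split; first by rewrite map_comp.
move=> x y xs ys /=; rewrite mk ?mh // map_f //.
Qed.

Lemma Sim_tass s t : Sim s t -> tass t = tass s.
Proof.
move=> [h [-> mh]]; rewrite !tassE -map_comp; apply/eq_in_map => x xs /=.
rewrite /tw undup_map_cnt //; apply: mono_sub mh => z; rewrite inE => /orP[/eqP->|] //.
Qed.

Lemma tw_mono w : mono_on (tw w) w.
Proof. by move=> x y xw yw; rewrite /tw ltnS cntlt_lt_mono ?mem_undup. Qed.

Lemma Sim_tassw w : Sim w (tass w).
Proof. by exists (tw w); split; [rewrite tassE | apply: tw_mono]. Qed.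

Lemma Sim_take i s t : Sim s t -> Sim (take i s) (take i t).
Proof.
move=> [h [-> mh]]; exists h; split; first by rewrite map_take.
by apply: mono_sub mh => z /mem_take.
Qed.

Lemma Sim_drop i s t : Sim s t -> Sim (drop i s) (drop i t).
Proof.
move=> [h [-> mh]]; exists h; split; first by rewrite map_drop.
by apply: mono_sub mh => z /mem_drop.
Qed.

Lemma tass_idem w : tass (tass w) = tass w.
Proof. exact/Sim_tass/Sim_tassw. Qed.

Lemma packed_tass w : packed (tass w).
Proof. by rewrite /packed tass_idem. Qed.

Definition Emap w x := (cntlt x w).+1.
Definition Ew w := map (Emap w) w.
Definition fixE w := forall x, x \in w -> (cntlt x w).+1 = x.

Lemma Emap_mono w : mono_on (Emap w) w.
Proof. by move=> x y xw yw; rewrite /Emap ltnS cntlt_lt_mono. Qed.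

Lemma Sim_E w : Sim w (Ew w).
Proof. by exists (Emap w); split; [|apply: Emap_mono]. Qed.

Lemma E_Sim s t : Sim s t -> Ew t = Ew s.
Proof.
move=> [h [-> mh]]; rewrite /Ew -map_comp; apply/eq_in_map => x xs /=.
rewrite /Emap /cntlt count_map; congr S; apply: eq_in_count => z zs /=.
exact: mh.
Qed.

Lemma fixE_Ew w : fixE w <-> Ew w = w.
Proof.
split => [H|H].
  by rewrite -[RHS]map_id; apply/eq_in_map => x xw; rewrite /Emap H.
move=> x xw; have := H; rewrite -[X in _ = X]map_id => /eq_in_map /(_ x xw).
by [].
Qed.

Lemma fixE_E w : fixE (Ew w).
Proof. by apply/fixE_Ew; apply: E_Sim; apply: Sim_E. Qed.

Lemma sorted_allge y s : sorted leq (y :: s) -> all (fun z => y <= z) s.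
Proof. by move=> srt; apply: (order_path_min leq_trans srt). Qed.

Lemma nth_count_sorted s x : sorted leq s -> x \in s -> nth 0 s (cntlt x s) = x.
Proof.
elim: s => //= y s IH srt; rewrite inE /cntlt /= -/(cntlt x s).
have ag := sorted_allge srt.
case: (ltnP y x) => yx /=.
  move=> /orP[/eqP e|xs]; first by rewrite e ltnn in yx.
  rewrite add0n; apply: IH => //; exact: path_sorted srt.
rewrite add0n; move=> /orP[/eqP e|xs].
  subst y; rewrite /cntlt (@eq_in_count _ _ pred0) ?count_pred0 // => z zs /=.
  by apply/negbTE; rewrite -leqNgt; exact: (allP ag z zs).
have := allP ag x xs => h; have e : x = y by apply/eqP; rewrite eqn_leq h yx.
subst y; rewrite /cntlt (@eq_in_count _ _ pred0) ?count_pred0 // => z zs /=.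
by apply/negbTE; rewrite -leqNgt; exact: (allP ag z zs).
Qed.

Lemma count_nth_sorted s i : sorted leq s -> i < size s -> cntlt (nth 0 s i) s <= i.
Proof.
elim: s i => //= y s IH [|i] srt /=; rewrite /cntlt /= -/(cntlt _ s).
  move=> _; rewrite ltnn add0n leqn0 -/(cntlt y s); apply/eqP.
  rewrite /cntlt (@eq_in_count _ _ pred0) ?count_pred0 // => z zs /=.
  by apply/negbTE; rewrite -leqNgt; exact: (allP (sorted_allge srt) z zs).
rewrite ltnS => isz; have := IH i (path_sorted srt) isz; lia.
Qed.

Lemma parking_le b : parking b -> forall x, x \in b -> x <= (cntlt x b).+1.
Proof.
rewrite /parking => /allP P x xb.
set s := sort leq b.
have xs : x \in s by rewrite mem_sort.
have ss : sorted leq s by apply: sort_sorted; exact: leq_total.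
have ce : cntlt x s = cntlt x b by rewrite /cntlt (permP (permEl (perm_sort leq b))).
have := P (cntlt x s); rewrite mem_iota add0n -(size_sort leq b) -/s.
rewrite cntlt_lt_size // => /(_ isT) /andP[_]; rewrite nth_count_sorted // ce //.
Qed.

Lemma fixE_pos w x : fixE w -> x \in w -> 0 < x.
Proof. by move=> H xw; rewrite -(H x xw). Qed.

Lemma fixE_parking w : fixE w -> parking w.
Proof.
move=> H; rewrite /parking; apply/allP => i; rewrite mem_iota add0n => /andP[_ iw].
set s := sort leq w.
have ss : sorted leq s by apply: sort_sorted; exact: leq_total.
have isz : i < size s by rewrite size_sort.
have nin : nth 0 s i \in w by rewrite -(mem_sort leq) mem_nth.
have ce : cntlt (nth 0 s i) s = cntlt (nth 0 s i) w.
  by rewrite /cntlt (permP (permEl (perm_sort leq w))).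
have e := H _ nin.
have := count_nth_sorted ss isz; rewrite ce => h.
apply/andP; split; lia.
Qed.

Lemma lexle_map g s : (forall x, x \in s -> x <= g x) -> lexle s (map g s).
Proof.
elim: s => //= x s IH H.
have hx : x <= g x by apply: H; rewrite in_cons eqxx.
have IH' : lexle s (map g s) by apply: IH => y ys; apply: H; rewrite in_cons ys orbT.
by move: hx; rewrite leq_eqVlt => /orP[/eqP <-|->] //; rewrite ltnn eqxx IH'.
Qed.

Lemma lexle_map_eq g s : (forall x, x \in s -> x <= g x) -> lexle (map g s) s ->
  map g s = s.
Proof.
elim: s => //= x s IH H.
have hx : x <= g x by apply: H; rewrite in_cons eqxx.
have IH' : lexle (map g s) s -> map g s = s.
  by apply: IH => y ys; apply: H; rewrite in_cons ys orbT.
rewrite ltnNge hx /= => /andP[/eqP -> /IH' ->] //.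
Qed.

Lemma detassP a : is_detass a <-> fixE a.
Proof.
split.
  move=> [pa H]; apply/fixE_Ew.
  have l : lexle (Ew a) a.
    apply: H; first exact/fixE_parking/fixE_E.
    by apply: Sim_tass; apply: Sim_E.
  apply: lexle_map_eq l => x xa; rewrite /Emap; exact: parking_le.
move=> H; split; first exact: fixE_parking.
move=> b pb tb.
have eb : Ew b = a.
  rewrite -(E_Sim (Sim_tassw b)) tb (E_Sim (Sim_tassw a)); exact/fixE_Ew.
rewrite -eb; apply: lexle_map => x xb; rewrite /Emap; exact: parking_le.
Qed.

Lemma head_filter_iota (P : pred nat) m k dflt :
  (exists2 i, m <= i < m + k & P i) ->
  let h := head dflt (filter P (iota m k)) in
  [/\ m <= h < m + k, P h & forall i, m <= i < h -> ~~ P i].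
Proof.
elim: k m => [|k IH] m [i ir Pi]; first by lia.
rewrite /= ; case Pm: (P m) => /=.
  split => //; first lia.
  by move=> j; lia.
have ir' : m.+1 <= i < m.+1 + k.
  case: (eqVneq i m) => e; first by rewrite e Pm in Pi.
  move: e ir => /eqP; lia.
have [h1 h2 h3] := IH m.+1 (ex_intro2 _ _ i ir' Pi).
split => //; first lia.
move=> j jr; case: (eqVneq j m) => [->|ne]; first by rewrite Pm.
apply: h3; move: ne => /eqP; lia.
Qed.

Definition cntle (i : nat) (w : seq nat) := count (fun x => x <= i) w.

Lemma dposP w : let d := dpos w in
  [/\ 1 <= d <= (size w).+1, cntle d w < d & forall i, 1 <= i < d -> i <= cntle i w].
Proof.
have ex : exists2 i, 1 <= i < 1 + (size w).+1 &
    (fun i => count (fun x => x <= i) w < i) i.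
  exists (size w).+1; first lia.
  by rewrite /= ltnS count_size.
have [h1 h2 h3] := head_filter_iota (size w).+1 ex.
rewrite /dpos /cntle; set hh := head _ _ in h1 h2 h3 *.
split => //.
by move=> i /h3; rewrite -leqNgt.
Qed.

Definition pstep (w : seq nat) :=
  map (fun x => if dpos w < x then x.-1 else x) w.

Lemma park_fuelE k w : park_fuel k.+1 w =
  if dpos w == (size w).+1 then w else park_fuel k (pstep w).
Proof. by []. Qed.

Lemma dpos_notin w : dpos w \notin w.
Proof.
have [h1 h2 h3] := dposP w; set d := dpos w in h1 h2 h3 *.
have e : cntle d w = cntle d.-1 w + count (pred1 d) w.
  rewrite /cntle; apply: count_add => y /=; case: (eqVneq y d) => [->|ne] /=; first lia.
  move: ne => /eqP; case: (leqP y d); case: (leqP y d.-1) => //=; lia.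
have : cntle d.-1 w >= d.-1.
  case: (eqVneq d 1) => [->|ne] //; apply: h3; move: ne => /eqP; lia.
rewrite -has_pred1 has_count; lia.
Qed.

Lemma pstep_size w : size (pstep w) = size w.
Proof. by rewrite size_map. Qed.

Lemma sumn_map_le (f : nat -> nat) w : (forall x, f x <= x) -> sumn (map f w) <= sumn w.
Proof. move=> H; elim: w => //= x w IH; have := H x; lia. Qed.

Lemma sumn_lt (f : nat -> nat) w : (forall x, f x <= x) -> has (fun x => f x < x) w ->
  sumn (map f w) < sumn w.
Proof.
move=> H; elim: w => //= x w IH /orP[h|h].
  have := sumn_map_le w H; lia.
have := IH h; have := H x; lia.
Qed.

Lemma pstep_sumn w : dpos w != (size w).+1 -> sumn (pstep w) < sumn w.
Proof.
move=> ne; have [h1 h2 h3] := dposP w; set d := dpos w in ne h1 h2 h3 *.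
apply: sumn_lt => [x|]; first by case: ifP => //; lia.
have : 0 < count (predC (fun x => x <= d)) w.
  have := count_predC (fun x => x <= d) w; rewrite /cntle in h2; move: ne => /eqP; lia.
rewrite -has_count => /hasP [x xw /= xd]; apply/hasP; exists x => //.
rewrite -ltnNge in xd; rewrite xd; lia.
Qed.

Lemma park_ind (Q : seq nat -> Prop) :
  (forall w, Q w -> dpos w != (size w).+1 -> Q (pstep w)) ->
  forall k w, sumn w < k -> Q w ->
  Q (park_fuel k w) /\ dpos (park_fuel k w) = (size (park_fuel k w)).+1.
Proof.
move=> Hs; elim => [|k IH] w; first by [].
move=> lt Qw; rewrite park_fuelE; case: eqP => [e|/eqP ne]; first by split.
apply: IH; last exact: Hs.
have := pstep_sumn ne; lia.
Qed.

Lemma park_spec (Q : seq nat -> Prop) :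
  (forall w, Q w -> dpos w != (size w).+1 -> Q (pstep w)) ->
  forall w, Q w -> Q (park w) /\ dpos (park w) = (size (park w)).+1.
Proof. by move=> Hs w Qw; apply: park_ind. Qed.

Lemma Sim_pstep w : Sim w (pstep w).
Proof.
exists (fun x => if dpos w < x then x.-1 else x); split => //.
have dn := dpos_notin w.
move=> x y xw yw.
have nx : x != dpos w by apply: contraNneq dn => <-.
have ny : y != dpos w by apply: contraNneq dn => <-.
move: nx ny => /eqP nx /eqP ny.
case: (ltnP (dpos w) x) => hx; case: (ltnP (dpos w) y) => hy; lia.
Qed.

Lemma Sim_park w : Sim w (park w).
Proof.
have := @park_spec (Sim w) (fun v sv _ => Sim_trans sv (Sim_pstep v)) w (Sim_refl w).
by case.
Qed.

Lemma tass_park w : tass (park w) = tass w.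
Proof. exact/Sim_tass/Sim_park. Qed.

Definition Iv w := forall x, x \in w -> forall k, count (fun y => k <= y < x) w <= x - k.
Definition Pos w := all (fun x => 0 < x) w.

Lemma Pos_pstep w : Pos w -> Pos (pstep w).
Proof.
have [h1 _ _] := dposP w.
move=> /allP P; apply/allP => y /mapP [x xw ->]; have := P x xw.
by case: ifP => h; lia.
Qed.

Lemma Iv_pstep w : Iv w -> dpos w != (size w).+1 -> Iv (pstep w).
Proof.
move=> I ne; have [h1 h2 h3] := dposP w; set d := dpos w in ne h1 h2 h3 *.
have dn : d \notin w := dpos_notin w.
move=> x' /mapP [x xw ->] k; rewrite count_map.
have xd : x != d by apply: contraNneq dn => <-.
move: xd => /eqP xd.
rewrite /preim /=. rewrite -/d.
case: (ltnP d x) => dx; last first.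
  apply: (leq_trans _ (I x xw k)); apply: count_le1 => y /=.
  case: (ltnP d y) => dy; lia.
case: (leqP k d) => kd; last first.
  apply: (leq_trans (count_le1 (Q := fun y => k.+1 <= y < x) _ _)).
    by move=> y /=; case: (ltnP d y) => dy; lia.
  have := I x xw k.+1; lia.
apply: (leq_trans (count_le2 (Q1 := fun y => k <= y <= d)
                              (Q2 := fun y => d.+1 <= y < x) _ _)).
  by move=> y /=; case: (ltnP d y) => dy; lia.
have := I x xw d.+1.
have e : cntle d w = count (fun y => y < k) w + count (fun y => k <= y <= d) w.
  by rewrite /cntle; apply: count_add => y /=; lia.
have ck : k.-1 <= count (fun y => y < k) w.
  case: (leqP k 1) => k1; first lia.
  have := h3 k.-1; rewrite /cntle.
  rewrite (@eq_count _ (fun x0 => x0 <= k.-1) (fun y => y < k)); last by move=> y; lia.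
  move=> H; apply: H; lia.
lia.
Qed.

Lemma fixE_final w : Pos w -> Iv w -> dpos w = (size w).+1 -> fixE w.
Proof.
move=> /allP P I dn x xw.
have [h1 h2 h3] := dposP w; rewrite dn in h1 h2 h3.
have c1 := I x xw 1.
have ce : cntlt x w = count (fun y => 1 <= y < x) w.
  by apply: eq_in_count => y yw /=; have := P y yw; lia.
have sz : 0 < size w by case: (w) xw.
have xn : x <= size w.
  have := h3 (size w); rewrite /cntle; move=> H.
  have : size w <= count (fun y => y <= size w) w by apply: H; lia.
  move=> H2; have : count (fun y => y <= size w) w == size w.
    by rewrite eqn_leq count_size H2.
  by rewrite -all_count => /allP /(_ x xw).
have px := P x xw.
case: (eqVneq x 1) => [x1|xn1].
  rewrite ce; move: c1; rewrite x1 /=; lia.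
have := h3 x.-1; rewrite /cntle.
rewrite (@eq_count _ (fun y => y <= x.-1) (fun y => y < x)); last by move=> y; lia.
move=> H; have : x.-1 <= count (fun y => y < x) w by apply: H; move: xn1 => /eqP; lia.
rewrite /cntlt in ce *; move: c1; rewrite -ce; lia.
Qed.

Lemma count_take_le (P : pred nat) i a : count P (take i a) <= count P a.
Proof. by rewrite -{2}(cat_take_drop i a) count_cat leq_addr. Qed.

Lemma count_drop_le (P : pred nat) i a : count P (drop i a) <= count P a.
Proof. by rewrite -{2}(cat_take_drop i a) count_cat leq_addl. Qed.

Lemma fixE_cnt_ge a k x : fixE a -> x \in a -> k <= x -> k.-1 <= cntlt k a.
Proof.
move=> F xa kx.
have ex : exists n, (n \in a) && (k <= n) by exists x; rewrite xa kx.
case: (ex_minnP ex) => z /andP[za kz] zmin.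
have -> : cntlt k a = cntlt z a.
  apply: eq_in_count => y ya /=; case: (ltnP y k) => yk; first lia.
  case: (ltnP y z) => yz //; have := zmin y; rewrite ya yk => /(_ isT); lia.
have := F z za; lia.
Qed.

Lemma fixE_Iv a : fixE a -> Iv a.
Proof.
move=> F x xa k; case: (ltnP k x) => kx; last first.
  rewrite (@eq_count _ _ pred0) ?count_pred0 // => y /=; lia.
have e : cntlt x a = cntlt k a + count (fun y => k <= y < x) a.
  by rewrite /cntlt; apply: count_add => y /=; lia.
have := fixE_cnt_ge F xa (ltnW kx); have := F x xa; lia.
Qed.

Lemma fixE_sub a s : fixE a -> (forall P, count P s <= count P a) ->
  {subset s <= a} -> Pos s /\ Iv s.
Proof.
move=> F C S; split.
  by apply/allP => x /S xa; apply: fixE_pos F xa.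
move=> x /S xa k; apply: leq_trans (C _) _; exact: fixE_Iv.
Qed.

Lemma fixE_park_sub a s : fixE a -> (forall P, count P s <= count P a) ->
  {subset s <= a} -> fixE (park s).
Proof.
move=> F C S.
have [[P I] D] := @park_spec (fun w => Pos w /\ Iv w)
  (fun w '(conj p i) ne => conj (Pos_pstep p) (Iv_pstep i ne)) s (fixE_sub F C S).
exact: fixE_final.
Qed.

Lemma fixE_park_take a i : fixE a -> fixE (park (take i a)).
Proof.
move=> F; apply: fixE_park_sub F _ _ => [P|x]; first exact: count_take_le.
exact: mem_take.
Qed.

Lemma fixE_park_drop a i : fixE a -> fixE (park (drop i a)).
Proof.
move=> F; apply: fixE_park_sub F _ _ => [P|x]; first exact: count_drop_le.
exact: mem_drop.
Qed.

Lemma shuffle_nil_r s : shuffle s [::] = [:: s].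
Proof. by case: s. Qed.

Lemma shuffle_cons x s y t : shuffle (x :: s) (y :: t) =
  map (cons x) (shuffle s (y :: t)) ++ map (cons y) (shuffle (x :: s) t).
Proof. by []. Qed.

Lemma perm_shuffle s t c : c \in shuffle s t -> perm_eq c (s ++ t).
Proof.
elim: s t c => [|x s IHs] t c; first by rewrite inE => /eqP ->.
elim: t c => [|y t IHt] c; first by rewrite shuffle_nil_r inE cats0 => /eqP ->.
rewrite shuffle_cons mem_cat => /orP[] /mapP [c' c'in ->].
  by rewrite /= perm_cons; apply: IHs.
have := IHt _ c'in => h.
apply/permP => P; move/permP: h => /(_ P); rewrite /= !count_cat /=; lia.
Qed.

Lemma map_shuffle (f : nat -> nat) s t :
  map (map f) (shuffle s t) = shuffle (map f s) (map f t).
Proof.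
elim: s t => [|x s IHs] t //.
elim: t => [|y t IHt]; first by rewrite !shuffle_nil_r.
have e1 : map f (x :: s) = f x :: map f s by [].
have e2 : map f (y :: t) = f y :: map f t by [].
rewrite shuffle_cons map_cat e1 e2 shuffle_cons -e2 -IHs -e1 -IHt -!map_comp.
by [].
Qed.

Lemma filter_nil_all (P : pred nat) c : filter P c = [::] -> filter (predC P) c = c.
Proof.
elim: c => //= z c IH; case: (P z) => //= /IH ->. by [].
Qed.

Lemma count_cons_map x (L : seq (seq nat)) z c :
  count (pred1 (z :: c)) (map (cons x) L) = (x == z) * count (pred1 c) L.
Proof.
rewrite count_map; case: (eqVneq x z) => [->|ne] /=.
  by rewrite mul1n; apply: eq_count => l /=; rewrite eqseq_cons eqxx.
rewrite mul0n (@eq_count _ _ pred0) ?count_pred0 // => l /=.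
by rewrite eqseq_cons (negbTE ne).
Qed.

Lemma count_cons_map0 x (L : seq (seq nat)) :
  count (pred1 [::]) (map (cons x) L) = 0.
Proof. by rewrite count_map (@eq_count _ _ pred0) ?count_pred0. Qed.

Lemma filter_split_one N t c : all (fun x => N < x) t ->
  ((filter (fun x => x <= N) c == [::]) && (filter (fun x => N < x) c == t)) = (c == t).
Proof.
move=> At; apply/idP/eqP => [/andP[/eqP e1 /eqP e2]|->].
  rewrite -e2 -[LHS](filter_nil_all e1); apply: eq_filter => z /=; lia.
apply/andP; split.
  rewrite -(@filter_pred0 _ t) (@eq_in_filter _ _ pred0) //.
  by move=> z /(allP At) /=; lia.
by apply/eqP/all_filterP.
Qed.

Lemma filter_split_one' N s c : all (fun x => x <= N) s ->
  ((filter (fun x => x <= N) c == s) && (filter (fun x => N < x) c == [::])) = (c == s).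
Proof.
move=> As; apply/idP/eqP => [/andP[/eqP e1 /eqP e2]|->].
  rewrite -e1 -[LHS](filter_nil_all e2); apply: eq_filter => z /=; lia.
apply/andP; split; first by apply/eqP/all_filterP.
rewrite -(@filter_pred0 _ s) (@eq_in_filter _ _ pred0) //.
by move=> z /(allP As) /=; lia.
Qed.

Lemma count_shuffle N s t c : all (fun x => x <= N) s -> all (fun x => N < x) t ->
  count (pred1 c) (shuffle s t) =
  ((filter (fun x => x <= N) c == s) && (filter (fun x => N < x) c == t)).
Proof.
elim: s t c => [|x s IHs] t c As At.
  by rewrite /= filter_split_one // addn0 eq_sym.
move: (As) => /andP[xN As'].
elim: t c At => [|y t IHt] c At.
  by rewrite shuffle_nil_r /= filter_split_one' // addn0 eq_sym.
move: (At) => /andP[Ny At'].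
rewrite shuffle_cons count_cat.
case: c => [|z c]; first by rewrite !count_cons_map0.
rewrite !count_cons_map IHs // IHt // /=.
case: (leqP z N) => zN /=.
  have -> : (y == z) = false by apply/negbTE/eqP; lia.
  by rewrite mul0n addn0 eqseq_cons [z == x]eq_sym; case: (x == z) => //=; rewrite mul1n; case: (_ && _).
have -> : (x == z) = false by apply/negbTE/eqP; lia.
by rewrite mul0n add0n eqseq_cons [z == y]eq_sym; case: (y == z) => //=; rewrite ?andbF ?mul1n ?muln0 //; case: (_ == _).
Qed.

Lemma fixE_le_size (a : seq nat) (x : nat) : fixE a -> x \in a -> x <= size a.
Proof. by move=> F xa; rewrite -(F x xa); apply: cntlt_lt_size. Qed.

Lemma fixE_shuffle (a b c : seq nat) : fixE a -> fixE b ->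
  c \in shuffle a (map (addn (size a)) b) -> fixE c.
Proof.
move=> Fa Fb /perm_shuffle P x xc.
have xab : x \in a ++ map (addn (size a)) b by rewrite -(perm_mem P).
rewrite /cntlt (permP P) count_cat -/(cntlt x a).
move: xab; rewrite mem_cat => /orP[xa|/mapP [z zb ->]].
  rewrite (@eq_in_count _ _ pred0) ?count_pred0 ?addn0 ?Fa //.
  move=> y /mapP [z zb ->] /=; apply/negbTE; rewrite -leqNgt.
  exact: leq_trans (fixE_le_size Fa xa) (leq_addr _ _).
rewrite count_map /preim /=.
rewrite (@eq_count _ _ (fun y => y < z)); last by move=> y /=; rewrite ltn_add2l.
have -> : cntlt (size a + z) a = size a.
  rewrite /cntlt (@eq_in_count _ _ predT) ?count_predT // => y ya /=.
  have := fixE_le_size Fa ya; have := fixE_pos Fb zb; lia.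
have := Fb z zb; rewrite /cntlt; lia.
Qed.

Lemma cnt_iota (x m r : nat) : cntlt x (iota m r) = minn (x - m) r.
Proof.
elim: r m => [|r IH] m /=; first by rewrite minn0.
rewrite /cntlt /= -/(cntlt x _) IH; case: (ltnP m x) => h /=; lia.
Qed.

Lemma letters_tass (w : seq nat) y : (y \in tass w) = (0 < y <= size (undup w)).
Proof.
rewrite tassE; apply/mapP/idP => [[x xw ->]|H].
  by rewrite /tw ltnS /= cntlt_lt_size // mem_undup.
set r := size (undup w).
have m := @tw_mono w.
have inj : {in undup w &, injective (tw w)}.
  by move=> a b; rewrite !mem_undup => ha hb; apply: (mono_inj m).
have U : uniq (map (tw w) (undup w)) by rewrite map_inj_in_uniq ?undup_uniq.
have S : {subset map (tw w) (undup w) <= iota 1 r}.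
  move=> z /mapP [x xw ->]; rewrite mem_iota /tw add1n ltnS /= ltnS /r cntlt_lt_size //.
have szle : size (iota 1 r) <= size (map (tw w) (undup w)) by rewrite size_iota size_map.
have [_ E] := uniq_min_size U S szle.
have : y \in iota 1 r by rewrite mem_iota; lia.
by rewrite -E => /mapP [x xw ->]; exists x; rewrite // -mem_undup.
Qed.

Lemma letters_packed (w : seq nat) R : (forall y, (y \in w) = (0 < y <= R)) ->
  packed w /\ size (undup w) = R.
Proof.
move=> H.
have P : perm_eq (undup w) (iota 1 R).
  apply: uniq_perm; rewrite ?undup_uniq ?iota_uniq // => y.
  by rewrite mem_undup H mem_iota; lia.
have sz : size (undup w) = R by rewrite (perm_size P) size_iota.
split => //; rewrite /packed tassE; apply/eqP.
rewrite -[RHS]map_id; apply/eq_in_map => x xw /=.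
rewrite /tw /cntlt (permP P) -/(cntlt x _) cnt_iota.
have := H x; rewrite xw; lia.
Qed.

Lemma packedP (w : seq nat) : packed w -> forall y, (y \in w) = (0 < y <= size (undup w)).
Proof. by move=> /eqP pw y; rewrite -letters_tass pw. Qed.

Lemma mem_allwords n m (w : seq nat) :
  (w \in allwords n m) = (size w == n) && all (fun x => 0 < x <= m) w.
Proof.
elim: n w => [|n IH] w; first by case: w.
change (w \in [seq i :: w | i <- iota 1 m, w <- allwords n m] =
  (size w == n.+1) && all (fun x => 0 < x <= m) w).
apply/allpairsP/idP => [[[i w'] [/= im wa ->]]|].
  move: wa im; rewrite IH mem_iota /= eqSS => /andP[-> ->] im; rewrite andbT /=; lia.
case: w => [|x w] //= /andP[sz /andP[xm wm]].
exists (x, w); split => /=; [rewrite mem_iota; lia | by rewrite IH -eqSS sz wm | by []].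
Qed.

Lemma uniq_allwords n m : uniq (allwords n m).
Proof.
elim: n => [|n IH] //.
change (uniq [seq i :: w | i <- iota 1 m, w <- allwords n m]).
apply: allpairs_uniq => //; first exact: iota_uniq.
by move=> [a b] [c d] _ _ /= [-> ->].
Qed.

Lemma mem_packed_words n (w : seq nat) : (w \in packed_words n) = packed w && (size w == n).
Proof.
rewrite /packed_words mem_filter mem_allwords.
case pw: (packed w) => //=; case: eqP => //= <-.
apply/allP => x xw; have := packedP pw x; rewrite xw => /esym /andP [-> h].
exact: leq_trans h (size_undup w).
Qed.

Lemma uniq_packed_words n : uniq (packed_words n).
Proof. exact/filter_uniq/uniq_allwords. Qed.

Definition Mx (w : seq nat) := \max_(x <- w) x.

Lemma Mx_le (w : seq nat) : packed w -> Mx w <= size (undup w).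
Proof.
move=> pw; apply/bigmax_leqP_seq => x xw _.
by have := packedP pw x; rewrite xw => /esym /andP[].
Qed.

Lemma iota_mem_eq (k m : nat) : (forall y, (0 < y <= k) = (0 < y <= m)) -> k = m.
Proof.
move=> H; case: (ltngtP k m) => // h.
  by move/(_ m): H; rewrite leqnn andbT (leqNgt m k) h andbF => /esym /negbT; lia.
by move/(_ k): H; rewrite leqnn andbT (leqNgt k m) h andbF => /negbT; lia.
Qed.

Lemma filter_le_letters (w0 : seq nat) k : packed w0 -> k <= size (undup w0) ->
  forall y, (y \in filter (fun x => x <= k) w0) = (0 < y <= k).
Proof.
move=> pw kR y; rewrite mem_filter (packedP pw y).
case: (leqP y k) => h /=; last by rewrite andbF.
by rewrite (leq_trans h kR) !andbT.
Qed.

Lemma filter_eq_u_k (u w0 : seq nat) k : packed u -> packed w0 -> k <= Mx w0 ->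
  filter (fun x => x <= k) w0 = u -> k = size (undup u).
Proof.
move=> pu pw kM e; apply: iota_mem_eq => y.
rewrite -(packedP pu y) -e filter_le_letters //.
exact: leq_trans kM (Mx_le pw).
Qed.

Lemma filter_gt_tass (w0 : seq nat) m : packed w0 -> m <= size (undup w0) ->
  tass (filter (fun x => m < x) w0) = map (subn^~ m) (filter (fun x => m < x) w0).
Proof.
move=> pw mR; set w' := filter _ w0; set R := size (undup w0).
have L : forall y, (y \in w') = (m < y <= R).
  move=> y; rewrite mem_filter (packedP pw y); case: (ltnP m y) => h /=.
    by rewrite (leq_ltn_trans (leq0n _) h).
  by [].
have P : perm_eq (undup w') (iota m.+1 (R - m)).
  apply: uniq_perm; rewrite ?undup_uniq ?iota_uniq // => y.
  by rewrite mem_undup L mem_iota; lia.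
rewrite tassE; apply/eq_in_map => y yw.
rewrite /tw /cntlt (permP P) -/(cntlt y _) cnt_iota.
have := L y; rewrite yw; lia.
Qed.

Lemma Sim_addn m (v : seq nat) : Sim v (map (addn m) v).
Proof. by exists (addn m); split => // x y _ _; rewrite ltn_add2l. Qed.

Lemma core_exists (u v w0 : seq nat) : packed u -> packed v -> packed w0 ->
  [exists k : 'I_(Mx w0).+1,
     (filter (fun x => x <= k) w0 == u) && (tass (filter (fun x => k < x) w0) == v)]
  = (filter (fun x => x <= size (undup u)) w0 == u) &&
    (filter (fun x => size (undup u) < x) w0 == map (addn (size (undup u))) v).
Proof.
move=> pu pv pw; set m := size (undup u).
apply/existsP/andP => [[k /andP[/eqP e1 /eqP e2]]|[/eqP e1 /eqP e2]].
  have km : (k : nat) = m := filter_eq_u_k pu pw (ltnSE (ltn_ord k)) e1.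
  rewrite -km; split; first by apply/eqP.
  have kR : k <= size (undup w0) := leq_trans (ltnSE (ltn_ord k)) (Mx_le pw).
  have := filter_gt_tass pw kR; rewrite e2 => ->.
  rewrite -map_comp; apply/eqP; rewrite -[LHS]map_id; apply/eq_in_map => y.
  by rewrite mem_filter => /andP[h _] /=; lia.
have mM : m < (Mx w0).+1.
  rewrite ltnS; case: (posnP m) => [->|mpos] //.
  have : m \in u by rewrite (packedP pu); lia.
  rewrite -e1 mem_filter => /andP[_ mw].
  exact: (@leq_bigmax_seq _ w0 xpredT (fun x => x) m mw isT).
exists (Ordinal mM) => /=; rewrite e1 e2 eqxx /=.
by rewrite (Sim_tass (Sim_addn m v)) (eqP pv).
Qed.

Lemma cond_pw (u v w0 : seq nat) : packed u -> packed v ->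
  filter (fun x => x <= size (undup u)) w0 = u ->
  filter (fun x => size (undup u) < x) w0 = map (addn (size (undup u))) v ->
  packed w0 /\ size w0 = size u + size v.
Proof.
move=> pu pv e1 e2; set m := size (undup u) in e1 e2.
split.
  apply: (proj1 (@letters_packed w0 (m + size (undup v)) _)) => y.
  have -> : (y \in w0) = (y \in filter (fun x => x <= m) w0) ||
                         (y \in filter (fun x => m < x) w0).
    by rewrite !mem_filter; case: (leqP y m) => /=; rewrite ?orbF.
  rewrite e1 e2 (packedP pu); apply/idP/idP.
    case/orP => [|/mapP [z zv ->]]; first lia.
    by have := packedP pv z; rewrite zv => /esym; lia.
  move=> h; case: (leqP y m) => ym; first by rewrite /m; lia.
  apply/orP; right; apply/mapP; exists (y - m); last lia.
  by rewrite (packedP pv); lia.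
rewrite -e1 -(size_map (addn m) v) -e2 !size_filter.
rewrite -(count_predC (fun x => x <= m) w0); congr addn.
by apply: eq_count => x /=; lia.
Qed.

Lemma undup_cat_disj (s t : seq nat) : (forall x, x \in s -> x \notin t) ->
  undup (s ++ t) = undup s ++ undup t.
Proof.
move=> H; rewrite undup_cat; congr (_ ++ _).
rewrite (@eq_in_filter _ _ predT) ?filter_predT // => x; rewrite mem_undup => /H.
by move=> ->.
Qed.

Lemma map_tass_shuffle (a b : seq nat) : fixE a -> fixE b ->
  map tass (shuffle a (map (addn (size a)) b)) =
  shuffle (tass a) (map (addn (size (undup a))) (tass b)).
Proof.
move=> Fa Fb; set n := size a; set b' := map (addn n) b.
have disj : forall x, x \in a -> x \notin b'.
  move=> x xa; apply/mapP => [[z zb e]].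
  have := fixE_le_size Fa xa; have := fixE_pos Fb zb; lia.
have U : undup (a ++ b') = undup a ++ undup b' by apply: undup_cat_disj.
set T := tw (a ++ b').
have -> : map tass (shuffle a b') = map (map T) (shuffle a b').
  apply/eq_in_map => c cin /=; rewrite tassE; apply/eq_in_map => x xc.
  rewrite /tw /T; congr S; rewrite /cntlt; apply/permP.
  apply: uniq_perm; rewrite ?undup_uniq // => y.
  by rewrite !mem_undup (perm_mem (perm_shuffle cin)).
rewrite map_shuffle; congr shuffle.
  rewrite tassE; apply/eq_in_map => x xa.
  rewrite /T /tw U /cntlt count_cat; congr S.
  rewrite (@eq_in_count _ _ pred0 (undup b')) ?count_pred0 ?addn0 // => y.
  rewrite mem_undup => /mapP [z zb ->] /=; apply/negbTE; rewrite -leqNgt.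
  have := fixE_le_size Fa xa; have := fixE_pos Fb zb; lia.
rewrite tassE /b' -!map_comp; apply/eq_in_map => z zb /=.
rewrite /T /tw U /cntlt count_cat.
rewrite (@eq_in_count _ _ predT (undup a)) ?count_predT; last first.
  move=> y; rewrite mem_undup => ya /=.
  have := fixE_le_size Fa ya; have := fixE_pos Fb zb; lia.
rewrite -/(cntlt _ _) -/(cntlt _ _) undup_map_cnt //.
  by rewrite addnS.
by move=> x y _ _; rewrite ltn_add2l.
Qed.

Lemma fixE_tass_inj (a b : seq nat) : fixE a -> fixE b -> tass a = tass b -> a = b.
Proof.
move=> /fixE_Ew Fa /fixE_Ew Fb e.
by rewrite -Fa -Fb -(E_Sim (Sim_tassw a)) -(E_Sim (Sim_tassw b)) e.
Qed.

Definition fixEb (w : seq nat) := all (fun x => (cntlt x w).+1 == x) w.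
Lemma fixEP w : reflect (fixE w) (fixEb w).
Proof. by apply: (iffP allP) => H x xw; [apply/eqP/H | apply/eqP/H]. Qed.

Lemma fixE_nil : fixE [::].
Proof. by []. Qed.

Local Open Scope ring_scope.

Section Alg.
Variable K : fieldType.

Section LinGen.
Variables I J : choiceType.

Lemma linEw (f : I -> {malg K[J]}) (g : {malg K[I]}) (d : {fset I}) :
  (msupp g `<=` d)%fset -> lin f g = \sum_(x <- d) g@_x *: f x.
Proof.
move=> sub; rewrite /lin; apply: big_fset_incl => // x _ /mcoeff_outdom ->.
by rewrite scale0r.
Qed.

Lemma lin_is_linear (f : I -> {malg K[J]}) : linear (lin f).
Proof.
move=> a u v; set d := (msupp u `|` msupp v)%fset.
have su : (msupp u `<=` d)%fset by apply: fsubsetUl.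
have sv : (msupp v `<=` d)%fset by apply: fsubsetUr.
have suv : (msupp (a *: u + v) `<=` d)%fset.
  apply: (fsubset_trans (msuppD_le _ _)); apply: fsetUSS => //.
  exact: msuppZ_le.
rewrite (linEw _ suv) (linEw _ su) (linEw _ sv) scaler_sumr -big_split /=.
apply: eq_bigr => x _; rewrite mcoeffD mcoeffZ scalerDl scalerA //.
Qed.

Lemma linD (f : I -> {malg K[J]}) g h : lin f (g + h) = lin f g + lin f h.
Proof. by have := @lin_is_linear f 1 g h; rewrite !scale1r. Qed.

Lemma lin0 (f : I -> {malg K[J]}) : lin f 0 = 0.
Proof. by rewrite /lin msupp0 big_seq_fset0. Qed.

Lemma linZ (f : I -> {malg K[J]}) a g : lin f (a *: g) = a *: lin f g.
Proof. by have := @lin_is_linear f a g 0; rewrite !addr0 lin0 addr0. Qed.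

Lemma linU (f : I -> {malg K[J]}) (a : I) : lin f << a >> = f a.
Proof.
rewrite (@linEw _ _ [fset a]%fset) ?msuppU_le // big_seq_fset1 mcoeffUU scale1r //.
Qed.

Lemma lin_sum (f : I -> {malg K[J]}) (s : seq (K * I)) :
  lin f (\sum_(p <- s) p.1 *: << p.2 >>) = \sum_(p <- s) p.1 *: f p.2.
Proof.
elim: s => [|p s IH]; first by rewrite !big_nil lin0.
by rewrite !big_cons linD linZ linU IH.
Qed.

Lemma lin_sumg (T : Type) (f : I -> {malg K[J]}) (s : seq T) (F : T -> {malg K[I]}) :
  lin f (\sum_(p <- s) F p) = \sum_(p <- s) lin f (F p).
Proof.
elim: s => [|p s IH]; first by rewrite !big_nil lin0.
by rewrite !big_cons linD IH.
Qed.


Lemma span0 (P : I -> Prop) : @in_span K _ P 0.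
Proof. by exists [::]; split => //; rewrite big_nil. Qed.

Lemma spanU (P : I -> Prop) a : P a -> @in_span K _ P << a >>.
Proof.
by move=> Pa; exists [:: (1, a)]; split; [move=> p; rewrite inE => /eqP -> | rewrite big_seq1 scale1r].
Qed.

Lemma spanD (P : I -> Prop) g h : @in_span K _ P g -> @in_span K _ P h -> @in_span K _ P (g + h).
Proof.
move=> [s [Ps ->]] [t [Pt ->]]; exists (s ++ t); split; last by rewrite big_cat.
by move=> p; rewrite mem_cat => /orP[/Ps|/Pt].
Qed.

Lemma spanZ (P : I -> Prop) a g : @in_span K _ P g -> @in_span K _ P (a *: g).
Proof.
move=> [s [Ps ->]]; exists [seq (a * p.1, p.2) | p <- s]; split.
  by move=> p /mapP [q qs ->]; exact: Ps qs.
by rewrite big_map scaler_sumr; apply: eq_bigr => p _; rewrite scalerA.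
Qed.

Lemma spanN (P : I -> Prop) g : @in_span K _ P g -> @in_span K _ P (- g).
Proof. by move=> h; rewrite -scaleN1r; apply: spanZ. Qed.

Lemma span_sum (T : eqType) (P : I -> Prop) (s : seq T) (F : T -> {malg K[I]}) :
  (forall x, x \in s -> @in_span K _ P (F x)) -> @in_span K _ P (\sum_(x <- s) F x).
Proof.
elim: s => [|x s IH] H; first by rewrite big_nil; apply: span0.
rewrite big_cons; apply: spanD; first by apply: H; rewrite inE eqxx.
by apply: IH => y ys; apply: H; rewrite inE ys orbT.
Qed.

Lemma span_sumT (T : Type) (P : I -> Prop) (s : seq T) (F : T -> {malg K[I]}) :
  (forall x, @in_span K _ P (F x)) -> @in_span K _ P (\sum_(x <- s) F x).
Proof.
move=> H; elim: s => [|x s IH]; first by rewrite big_nil; apply: span0.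
by rewrite big_cons; apply: spanD.
Qed.

Lemma span_ext (P Q : I -> Prop) g : (forall a, P a -> Q a) -> @in_span K _ P g -> @in_span K _ Q g.
Proof. by move=> H [s [Ps e]]; exists s; split => // p /Ps /H. Qed.

End LinGen.

Lemma span_lin (I J : choiceType) (P : I -> Prop) (Q : J -> Prop) f g :
  @in_span K _ P g -> (forall a, P a -> @in_span K _ Q (f a)) -> @in_span K _ Q (lin f g).
Proof.
move=> [s [Ps ->]] H; rewrite lin_sum; apply: span_sum => p ps.
by apply: spanZ; apply: H; apply: Ps.
Qed.

Lemma bilinE (I J : choiceType) (f : I -> I -> {malg K[J]}) g h :
  bilin f g h = lin (fun x => lin (f x) h) g.
Proof.
rewrite /bilin /lin; apply: eq_bigr => x _; rewrite scaler_sumr.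
by apply: eq_bigr => y _; rewrite scalerA.
Qed.

Lemma bilin_sum (I J : choiceType) (f : I -> I -> {malg K[J]}) (s t : seq (K * I)) :
  bilin f (\sum_(p <- s) p.1 *: << p.2 >>) (\sum_(q <- t) q.1 *: << q.2 >>) =
  \sum_(p <- s) \sum_(q <- t) (p.1 * q.1) *: f p.2 q.2.
Proof.
rewrite bilinE lin_sum; apply: eq_bigr => p _; rewrite lin_sum scaler_sumr.
by apply: eq_bigr => q _; rewrite scalerA.
Qed.

Lemma bilinU (I J : choiceType) (f : I -> I -> {malg K[J]}) a b :
  bilin f << a >> << b >> = f a b.
Proof. by rewrite bilinE !linU. Qed.

Lemma span_bilin (I J : choiceType) (P : I -> Prop) (Q : J -> Prop) f g h :
  @in_span K _ P g -> @in_span K _ P h -> (forall a b, P a -> P b -> @in_span K _ Q (f a b)) ->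
  @in_span K _ Q (bilin f g h).
Proof.
move=> [s [Ps ->]] [t [Pt ->]] H; rewrite bilin_sum.
apply: span_sum => p ps; apply: span_sum => q qt.
by apply: spanZ; apply: H; [apply: Ps | apply: Pt].
Qed.

End Alg.

Section Main.
Variable K : fieldType.

Lemma mcoeff_sum (I : choiceType) (T : Type) (s : seq T) (F : T -> {malg K[I]}) k :
  (\sum_(x <- s) F x)@_k = \sum_(x <- s) (F x)@_k.
Proof.
elim: s => [|x s IH]; first by rewrite !big_nil mcoeff0.
by rewrite !big_cons mcoeffD IH.
Qed.

Lemma mcoeffU1 (I : choiceType) (x k : I) : (<< x >> : {malg K[I]})@_k = (x == k)%:R.
Proof. by rewrite mcoeffU. Qed.

Lemma sum_count (I : eqType) (s : seq I) w0 :
  \sum_(x <- s) (x == w0)%:R = (count (pred1 w0) s)%:R :> K.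
Proof.
elim: s => [|x s IH]; first by rewrite big_nil.
by rewrite big_cons IH /= natrD.
Qed.

Lemma sum_delta (I : eqType) (V : lmodType K) (l : seq I) x (F : I -> V) :
  uniq l -> x \in l -> \sum_(y <- l) (y == x)%:R *: F y = F x.
Proof.
move=> ul xl; rewrite (bigD1_seq x) //= eqxx scale1r big1 ?addr0 // => y /negbTE ->.
by rewrite scale0r.
Qed.

Lemma sum_coef (I : eqType) (l : seq I) (c : I -> K) w0 :
  uniq l -> \sum_(w <- l) c w * (w == w0)%:R = (w0 \in l)%:R * c w0.
Proof.
move=> ul; case: (boolP (w0 \in l)) => wl.
  rewrite mul1r (bigD1_seq w0) //= eqxx mulr1 big1 ?addr0 // => w /negbTE ->.
  by rewrite mulr0.
rewrite mul0r big_seq big1 // => w wl'; case: eqP => [e|]; last by rewrite mulr0.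
by move: wl; rewrite -e wl'.
Qed.

Lemma sum_unique n (P : pred 'I_n) : (forall i j, P i -> P j -> i = j) ->
  \sum_(i < n) (P i)%:R = ([exists i, P i])%:R :> K.
Proof.
move=> U; case: (existsP) => [[i Pi]|nP].
  rewrite (bigD1 i) //= Pi big1 ?addr0 // => j ne.
  case Pj: (P j) => //; have e := U _ _ Pi Pj; by rewrite e eqxx in ne.
rewrite big1 // => i _; case Pi: (P i) => //; case: nP; by exists i.
Qed.

Definition phiF : {malg K[seq nat]} -> {malg K[seq nat]} :=
  lin (fun a : seq nat => << tass a >> : {malg K[seq nat]}).

HB.instance Definition _ := GRing.isLinear.Build K {malg K[seq nat]} {malg K[seq nat]}
  *:%R phiF (lin_is_linear _).

Lemma phiU a : phiF << a >> = << tass a >>.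
Proof. exact: linU. Qed.

Definition VF := @in_span K _ fixE.

Lemma VF_unit : VF (unitP K).
Proof. exact: spanU. Qed.

Lemma VF_mul g h : VF g -> VF h -> VF (mulP g h).
Proof.
move=> Vg Vh; apply: span_bilin Vg Vh _ => a b Fa Fb.
apply: span_sum => c cin; apply: spanU; exact: fixE_shuffle cin.
Qed.

Lemma VF_Delta g : VF g ->
  @in_span K _ (fun p : seq nat * seq nat => fixE p.1 /\ fixE p.2) (DeltaP g).
Proof.
move=> Vg; apply: span_lin Vg _ => a Fa; apply: span_sumT => i; apply: spanU.
by split; [apply: fixE_park_take | apply: fixE_park_drop].
Qed.

Lemma VF_antip_fuel k a : fixE a -> VF (antipP_fuel K k a).
Proof.
elim: k a => [|k IH] a Fa /=; first exact: span0.
case: a Fa => [|x a] Fa; first exact: spanU.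
apply: spanN; apply: span_sumT => i; apply: VF_mul.
  by apply: IH; apply: fixE_park_take.
by apply: spanU; apply: fixE_park_drop.
Qed.

Lemma VF_antip g : VF g -> VF (antipP g).
Proof. by move=> Vg; apply: span_lin Vg _ => a Fa; apply: VF_antip_fuel. Qed.

Lemma NC_phi g : VF g -> @in_span K _ (fun u => packed u) (phiF g).
Proof. by move=> Vg; apply: span_lin Vg _ => a _; apply: spanU; apply: packed_tass. Qed.

Lemma VF_coef g : VF g -> forall a,
  g@_a = (fixEb a)%:R * (phiF g)@_(tass a).
Proof.
move=> [s [Ps ->]] a; rewrite /phiF lin_sum !mcoeff_sum big_distrr /= !big_seq.
apply: eq_bigr => p ps; rewrite !mcoeffZ !mcoeffU1 mulrCA; congr (_ * _).
have Fp := Ps p ps.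
case: (fixEP a) => Fa /=.
  rewrite mul1r; congr ((nat_of_bool _)%:R).
  apply/idP/idP => /eqP H; apply/eqP; [by rewrite H | exact: fixE_tass_inj].
by rewrite mulr0n mul0r; case: eqP => // e; rewrite -e in Fa.
Qed.

Lemma phi_inj g h : VF g -> VF h -> phiF g = phiF h -> g = h.
Proof.
move=> Vg Vh e; apply/malgP => a; by rewrite (VF_coef Vg) (VF_coef Vh) e.
Qed.

Lemma phi_surj x : @in_span K _ (fun u => packed u) x -> exists2 g, VF g & phiF g = x.
Proof.
move=> [s [Ps ->]]; exists (\sum_(p <- s) p.1 *: << Ew p.2 >>).
  apply: span_sum => p ps; apply: spanZ; apply: spanU; exact: fixE_E.
rewrite /phiF lin_sumg; apply: eq_big_seq => p ps.
by rewrite linZ linU (Sim_tass (Sim_E p.2)) (eqP (Ps p ps)).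
Qed.

Lemma dM_E (u v w0 : seq nat) : packed u -> packed w0 ->
  dM K u v w0 = ([exists k : 'I_(Mx w0).+1,
     (filter (fun x => (x <= k)%N) w0 == u) && (tass (filter (fun x => (k < x)%N) w0) == v)])%:R.
Proof.
move=> pu pw; rewrite /dM /DeltaM mcoeff_sum.
apply: etrans; first by apply: eq_bigr => k _; rewrite mcoeffU xpair_eqE.
apply: (@sum_unique _ (fun k : 'I_(Mx w0).+1 =>
  (filter (fun x => (x <= k)%N) w0 == u) && (tass (filter (fun x => (k < x)%N) w0) == v))).
move=> i j /andP[/eqP ei _] /andP[/eqP ej _]; apply/val_inj => /=.
rewrite (filter_eq_u_k pu pw (ltnSE (ltn_ord i)) ei).
by rewrite (filter_eq_u_k pu pw (ltnSE (ltn_ord j)) ej).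
Qed.

Lemma size_undup_tass (a : seq nat) : size (undup (tass a)) = size (undup a).
Proof. by have [_ ->] := letters_packed (letters_tass a). Qed.

Lemma mul_core (a b : seq nat) : fixE a -> fixE b ->
  phiF (\sum_(c <- shuffle a (map (addn (size a)) b)) << c >>) =
  \sum_(w <- packed_words (size (tass a) + size (tass b)))
     dM K (tass a) (tass b) w *: << w >>.
Proof.
move=> Fa Fb; rewrite /phiF lin_sumg.
under eq_bigr do rewrite linU.
rewrite -(big_map tass xpredT (fun w => << w >>)) map_tass_shuffle //.
rewrite -size_undup_tass.
have pu := packed_tass a; have pv := packed_tass b.
set u := tass a; set v := tass b; set m := size (undup u).
apply/malgP => w0; rewrite !mcoeff_sum.
under eq_bigr do rewrite mcoeffU1.
under [RHS]eq_bigr do rewrite mcoeffZ mcoeffU1.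
rewrite sum_count sum_coef ?uniq_packed_words //.
rewrite (count_shuffle (N := m)).
- case C: (_ && _).
    move: C => /andP[/eqP e1 /eqP e2].
    have [pw0 sz] := cond_pw pu pv e1 e2.
    rewrite mem_packed_words pw0 sz eqxx /= mul1r dM_E // core_exists //.
    by rewrite /m e1 e2 !eqxx.
  case: (boolP (w0 \in packed_words _)) => win; last by rewrite mul0r.
  move: (win); rewrite mem_packed_words => /andP[pw0 _].
  by rewrite dM_E // core_exists // -/m C mulr0.
- by apply/allP => x xu; have := packedP pu x; rewrite xu => /esym /andP[].
- apply/allP => x /mapP [z zv ->]; have := packedP pv z; rewrite zv => /esym /andP[].
  lia.
Qed.

Lemma cM_E (u v w : seq nat) (i : nat) : (i <= size w)%N -> size u = i ->
  cM K u v w = ((tass (take i w) == u) && (tass (drop i w) == v))%:R.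
Proof.
move=> iw su; rewrite /cM /sprod /Mser.
have ilt : (i < (size w).+1)%N by rewrite ltnS.
rewrite (bigD1 (Ordinal ilt)) //= big1 ?addr0; first by rewrite -natrM mulnb.
move=> j ne; have : (tass (take j w) == u) = false.
  apply/negbTE; apply/eqP => e; move: ne; rewrite -val_eqE /=.
  have := congr1 size e; rewrite tassE size_map size_takel ?su; first by move->; rewrite eqxx.
  by rewrite -ltnS ltn_ord.
by move=> ->; rewrite mul0r.
Qed.


Lemma Delta_core (a : seq nat) : fixE a ->
  lin (fun p : seq nat * seq nat => tens (phiF << p.1 >>) (phiF << p.2 >>))
      (\sum_(i < (size a).+1) << (park (take i a), park (drop i a)) >>)
  = \sum_(i < (size (tass a)).+1) \sum_(u <- packed_words i)
       \sum_(v <- packed_words (size (tass a) - i)) cM K u v (tass a) *: << (u, v) >>.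
Proof.
move=> Fa; rewrite lin_sumg.
have sz : size (tass a) = size a by rewrite tassE size_map.
rewrite sz; apply: eq_bigr => i _.
rewrite linU /= !phiU !tass_park /tens bilinU.
have ia : (i <= size a)%N by rewrite -ltnS ltn_ord.
set U := tass (take i a); set V := tass (drop i a).
have eU : tass (take i (tass a)) = U := Sim_tass (Sim_take i (Sim_tassw a)).
have eV : tass (drop i (tass a)) = V := Sim_tass (Sim_drop i (Sim_tassw a)).
rewrite (eq_big_seq (fun u => (u == U)%:R *:
   \sum_(v <- packed_words (size a - i)) (v == V)%:R *: << (u, v) >>)); last first.
  move=> u uin; rewrite scaler_sumr; apply: eq_big_seq => v vin.
  rewrite (@cM_E u v (tass a) i) ?sz //; last by move: uin; rewrite mem_packed_words => /andP[_ /eqP].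
  by rewrite eU eV scalerA -natrM mulnb [U == u]eq_sym [V == v]eq_sym.
rewrite sum_delta ?uniq_packed_words ?sum_delta ?uniq_packed_words //.
  by rewrite mem_packed_words packed_tass /V tassE size_map size_drop eqxx.
by rewrite mem_packed_words packed_tass /U tassE size_map size_takel ?eqxx.
Qed.

Lemma Delta_main (s : seq (K * seq nat)) : (forall p, p \in s -> fixE p.2) ->
  lin (fun p : seq nat * seq nat => tens (phiF << p.1 >>) (phiF << p.2 >>))
      (DeltaP (\sum_(p <- s) p.1 *: << p.2 >>))
  = DeltaN (phiF (\sum_(p <- s) p.1 *: << p.2 >>)).
Proof.
move=> Ps; rewrite /DeltaP lin_sum lin_sumg /phiF lin_sum /DeltaN lin_sumg.
apply: eq_big_seq => p ps; rewrite !linZ linU; congr (_ *: _).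
exact: Delta_core (Ps p ps).
Qed.

End Main.

Theorem proposition3p5 (K : fieldType) (charK0 : [pchar K] =i pred0) :
  let V := @in_span K _ is_detass in
  let V2 := @in_span K _ (fun p : seq nat * seq nat => is_detass p.1 /\ is_detass p.2) in
  let NC := @in_span K _ (fun u => packed u) in
  (* the span V of the F_{detass(u)} is a Hopf subalgebra of PQSym *)
  (V (unitP K)
   /\ (forall g h, V g -> V h -> V (mulP g h))
   /\ (forall g, V g -> V2 (DeltaP g))
   /\ (forall g, V g -> V (antipP g)))
  /\
  (* V is isomorphic (as a bialgebra, hence as a Hopf algebra) to NCQSym^* *)
  (exists phi : {linear {malg K[seq nat]} -> {malg K[seq nat]}},
     (forall g, V g -> NC (phi g))
     /\ (forall g h, V g -> V h -> phi g = phi h -> g = h)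
     /\ (forall x, NC x -> exists2 g, V g & phi g = x)
     /\ phi (unitP K) = unitN K
     /\ (forall g h, V g -> V h -> phi (mulP g h) = mulN (phi g) (phi h))
     /\ (forall g, V g -> epsN (phi g) = epsP g)
     /\ (forall g, V g -> tmap phi (DeltaP g) = DeltaN (phi g))).
Proof.
move=> V V2 NC.
have VV : forall g, V g <-> VF g.
  by move=> g; split; apply: span_ext => a /detassP.
split.
  split; [|split; [|split]].
  - by apply/VV; apply: VF_unit.
  - by move=> g h /VV Vg /VV Vh; apply/VV; apply: VF_mul.
  - move=> g /VV Vg; apply: span_ext (VF_Delta Vg) => p [F1 F2].
    by split; apply/detassP.
  - by move=> g /VV Vg; apply/VV; apply: VF_antip.
exists (@phiF K : {linear {malg K[seq nat]} -> {malg K[seq nat]}}).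
split; [|split; [|split; [|split; [|split; [|split]]]]].
- by move=> g /VV; apply: NC_phi.
- by move=> g h /VV Vg /VV Vh; apply: phi_inj.
- by move=> x /phi_surj [g Vg e]; exists g => //; apply/VV.
- by rewrite /= phiU.
- move=> g h /VV [s [Ps ->]] /VV [t [Pt ->]] /=.
  have E : forall r : seq (K * seq nat), phiF (\sum_(p <- r) p.1 *: << p.2 >>) =
      \sum_(p <- map (fun p => (p.1, tass p.2)) r) p.1 *: << p.2 >>.
    by move=> r; rewrite big_map /phiF lin_sum.
  rewrite !E /mulP /mulN !bilin_sum !big_map /phiF lin_sumg.
  apply: eq_big_seq => p ps; rewrite lin_sumg big_map; apply: eq_big_seq => q qt /=.
  rewrite linZ; congr (_ *: _); exact: mul_core (Ps p ps) (Pt q qt).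
- by move=> g /VV Vg; rewrite /epsN /epsP /= (VF_coef Vg [::]) /= mul1r.
- move=> g /VV [s [Ps ->]].
  exact: Delta_main Ps.
Qed.
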